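(* $\mathrm{NID}\notin\Pi_1$; that is, there is no computable function $f:\{0,1\}^*\times\{0,1\}^*\times\omega\to\mathbb{Q}$ which is nonincreasing in $s$ and satisfies $\lim_{s\to\infty}f(x,y,s)=\mathrm{NID}(x,y)$ for all $x,y$.
   Context: Fix a universal prefix-free machine $U$. $K(x)$ denotes prefix-free Kolmogorov complexity and $K(x\mid y)$ conditional prefix-free complexity. For binary strings $x,y$ let $E(x,y)=\max\{K(x\mid y),K(y\mid x)\}$ and $\mathrm{NID}(x,y)=\dfrac{E(x,y)}{\max\{K(x),K(y)\}}$ (a rational number). A function $F$ (on pairs of strings, rational-valued) is in $\Pi_1$ if it has a computable approximation $f$ with $\lim_s f(\cdot,s)=F$ that is nonincreasing in $s$. *)

(* Defs.v *)
From Stdlib Require Import List Arith QArith Qabs Cantor.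
Local Open Scope nat_scope.
Import ListNotations.

Inductive code : Type :=
| CZero
| CSucc
| CProj (i : nat)
| CComp (f : code) (gs : list code)
| CPrim (f g : code)
| CMu (f : code).

(* Step-indexed evaluation (monotone in fuel).  Missing arguments read as 0. *)
Fixpoint eval (fuel : nat) (c : code) (args : list nat) {struct fuel} : option nat :=
  match fuel with
  | 0 => None
  | S n =>
    match c with
    | CZero => Some 0
    | CSucc => Some (S (hd 0 args))
    | CProj i => Some (nth i args 0)
    | CComp f gs =>
        match (fix evl (l : list code) : option (list nat) :=
                 match l with
                 | nil => Some nil
                 | g :: l' =>
                     match eval n g args, evl l' with
                     | Some v, Some vs => Some (v :: vs)
                     | _, _ => None
                     end
                 end) gs with
        | Some vs => eval n f vs
        | None => None
        end
    | CPrim f g =>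
        let rest := tl args in
        match hd 0 args with
        | 0 => eval n f rest
        | S x => match eval n (CPrim f g) (x :: rest) with
                 | Some r => eval n g (x :: r :: rest)
                 | None => None
                 end
        end
    | CMu f =>
        (fix search (k y : nat) : option nat :=
           match k with
           | 0 => None
           | S k' => match eval n f (y :: args) with
                     | Some 0 => Some y
                     | Some _ => search k' (S y)
                     | None => None
                     end
           end) n 0
    end
  end.

Definition halts (c : code) (args : list nat) (v : nat) : Prop :=
  exists fuel, eval fuel c args = Some v.

Definition bstr := list bool.

Fixpoint enc (s : bstr) : nat :=
  match s with
  | nil => 0
  | b :: s' => S (2 * enc s' + (if b then 1 else 0))
  end.

Definition runs (c : code) (p y x : bstr) : Prop := halts c [enc p; enc y] (enc x).

Definition in_dom (c : code) (p y : bstr) : Prop := exists x, runs c p y x.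

Definition prefix_free_machine (c : code) : Prop :=
  forall y p q, in_dom c p y -> in_dom c (p ++ q) y -> q = nil.

Definition universal_pf (u : code) : Prop :=
  prefix_free_machine u /\
  forall m : code, prefix_free_machine m ->
    exists sigma : bstr, forall p y x, runs u (sigma ++ p) y x <-> runs m p y x.

Definition Kc (u : code) (x y : bstr) (k : nat) : Prop :=
  (exists p, runs u p y x /\ length p = k) /\
  (forall p, runs u p y x -> k <= length p).

Definition Ku (u : code) (x : bstr) (k : nat) : Prop := Kc u x nil k.

Local Open Scope Q_scope.
Definition NID_is (u : code) (x y : bstr) (q : Q) : Prop :=
  exists kxy kyx kx ky,
    Kc u x y kxy /\ Kc u y x kyx /\ Ku u x kx /\ Ku u y ky /\
    q == inject_Z (Z.of_nat (Nat.max kxy kyx)) / inject_Z (Z.of_nat (Nat.max kx ky)).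

(* Output n codes the rational (a - b)/(c+1) where (a,(b,c)) = Cantor decoding of n. *)
Definition decodeQ (n : nat) : Q :=
  let (a, r) := Cantor.of_nat n in
  let (b, c) := Cantor.of_nat r in
  (inject_Z (Z.of_nat a) - inject_Z (Z.of_nat b)) / inject_Z (Z.of_nat (S c)).

Definition computable3 (f : bstr -> bstr -> nat -> Q) : Prop :=
  exists e : code, forall x y s,
    exists n, halts e [enc x; enc y; s] n /\ decodeQ n == f x y s.

Definition Q_limit (a : nat -> Q) (l : Q) : Prop :=
  forall eps : Q, 0 < eps -> exists s0, forall s, (s0 <= s)%nat -> Qabs.Qabs (a s - l) < eps.

(* Main.v *)
Require Import Defs.
From Stdlib Require Import List Arith QArith.
From Stdlib Require Import Lia Qabs ZArith Cantor Classical ClassicalEpsilon FinFun.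
Import ListNotations.
Open Scope nat_scope.

Lemma eval_mono : forall n c a v, eval n c a = Some v -> forall m, n <= m -> eval m c a = Some v.
Proof.
  induction n as [|n IH]; intros c a v H m Hm; [discriminate|].
  destruct m as [|m]; [lia|]. assert (Hnm: n <= m) by lia.
  destruct c; cbn in H |- *; try exact H.
  - match goal with |- match ?F2 gs with _ => _ end = _ => set (G2 := F2) end.
    match type of H with match ?F1 gs with _ => _ end = _ => set (G1 := F1) in H end.
    assert (HG : forall l vs, G1 l = Some vs -> G2 l = Some vs).
    { induction l as [|g l IHl]; intros vs Hv; [exact Hv|].
      cbn in Hv |- *. destruct (eval n g a) eqn:E1; [|discriminate].
      destruct (G1 l) eqn:E2; [|discriminate].
      rewrite (IH _ _ _ E1 m Hnm). rewrite (IHl _ eq_refl). exact Hv. }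
    destruct (G1 gs) eqn:E; [|discriminate].
    rewrite (HG _ _ E). eauto.
  - destruct (hd 0 a) as [|x]; [eauto|].
    destruct (eval n (CPrim c1 c2) (x :: tl a)) eqn:E; [|discriminate].
    rewrite (IH _ _ _ E m Hnm). eauto.
  - revert H. generalize 0 as y.
    assert (Hk: forall k k' y, k <= k' ->
      (fix search (k y : nat) : option nat :=
           match k with
           | 0 => None
           | S k' => match eval n c (y :: a) with
                     | Some 0 => Some y
                     | Some _ => search k' (S y)
                     | None => None
                     end
           end) k y = Some v ->
      (fix search (k y : nat) : option nat :=
           match k with
           | 0 => None
           | S k' => match eval m c (y :: a) with
                     | Some 0 => Some y
                     | Some _ => search k' (S y)
                     | None => None
                     end
           end) k' y = Some v).
    { induction k as [|k IHk]; intros k' y Hk H; [discriminate|].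
      destruct k' as [|k']; [lia|]. cbn in H |- *.
      destruct (eval n c (y :: a)) eqn:E; [|discriminate].
      rewrite (IH _ _ _ E m Hnm). destruct n0; [exact H|]. apply IHk; [lia|exact H]. }
    intros y H. apply (Hk n); [lia|exact H].
Qed.

Fixpoint evl n (gs : list code) args : option (list nat) :=
  match gs with
  | nil => Some nil
  | g :: l => match eval n g args, evl n l args with
              | Some v, Some vs => Some (v :: vs)
              | _, _ => None end
  end.

Fixpoint search n f args k y : option nat :=
  match k with
  | 0 => None
  | S k' => match eval n f (y :: args) with
            | Some 0 => Some y
            | Some _ => search n f args k' (S y)
            | None => None end
  end.

Lemma eval_comp n f gs args : eval (S n) (CComp f gs) args =
  match evl n gs args with Some vs => eval n f vs | None => None end.
Proof.
  cbn. match goal with |- match ?F gs with _ => _ end = _ => set (G := F) end.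
  assert (H : forall l, G l = evl n l args).
  { induction l; cbn; [reflexivity|]. rewrite IHl. reflexivity. }
  rewrite H. reflexivity.
Qed.

Lemma eval_mu n f args : eval (S n) (CMu f) args = search n f args n 0.
Proof.
  cbn. match goal with |- ?F n 0 = _ => set (G := F) end.
  assert (H : forall k y, G k y = search n f args k y).
  { induction k; intros y; cbn; [reflexivity|].
    destruct (eval n f (y :: args)) as [[|]|]; auto. }
  apply H.
Qed.

Lemma eval_prim n f g args : eval (S n) (CPrim f g) args =
  match hd 0 args with
  | 0 => eval n f (tl args)
  | S x => match eval n (CPrim f g) (x :: tl args) with
           | Some r => eval n g (x :: r :: tl args)
           | None => None end
  end.
Proof. reflexivity. Qed.

Lemma halts_det c l v w : halts c l v -> halts c l w -> v = w.
Proof.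
  intros [n Hn] [m Hm].
  pose proof (eval_mono _ _ _ _ Hn (max n m)) as A1.
  pose proof (eval_mono _ _ _ _ Hm (max n m)) as A2.
  assert (n <= max n m) by lia. assert (m <= max n m) by lia. specialize (A1 H); specialize (A2 H0). congruence.
Qed.

Lemma halts_ev c l v : halts c l v -> exists N, forall m, N <= m -> eval m c l = Some v.
Proof. intros [n Hn]. exists n. intros. eapply eval_mono; eauto. Qed.

Lemma h_zero l : halts CZero l 0.
Proof. exists 1. reflexivity. Qed.
Lemma h_succ l : halts CSucc l (S (hd 0 l)).
Proof. exists 1. reflexivity. Qed.
Lemma h_proj i l : halts (CProj i) l (nth i l 0).
Proof. exists 1. reflexivity. Qed.

Lemma evl_ok gs l vs : Forall2 (fun g v => halts g l v) gs vs ->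
  exists N, forall m, N <= m -> evl m gs l = Some vs.
Proof.
  induction 1 as [|g v gs vs Hg _ [N HN]].
  - exists 0; reflexivity.
  - destruct (halts_ev _ _ _ Hg) as [M HM]. exists (max N M). intros m Hm.
    cbn. rewrite HM by lia. rewrite HN by lia. reflexivity.
Qed.

Lemma h_comp f gs l vs v : Forall2 (fun g v => halts g l v) gs vs -> halts f vs v ->
  halts (CComp f gs) l v.
Proof.
  intros H1 H2. destruct (evl_ok _ _ _ H1) as [N HN]. destruct (halts_ev _ _ _ H2) as [M HM].
  exists (S (max N M)). rewrite eval_comp, HN by lia. apply HM; lia.
Qed.

Lemma evl_sound n gs l vs : evl n gs l = Some vs -> Forall2 (fun g v => halts g l v) gs vs.
Proof.
  revert vs; induction gs; intros vs H; cbn in H.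
  - injection H as <-. constructor.
  - destruct (eval n a l) eqn:E; [|discriminate]. destruct (evl n gs l) eqn:E2; [|discriminate].
    injection H as <-. constructor; [exists n; exact E|]. auto.
Qed.

Lemma h_comp_inv f gs l v : halts (CComp f gs) l v ->
  exists vs, Forall2 (fun g v => halts g l v) gs vs /\ halts f vs v.
Proof.
  intros [[|n] Hn]; [discriminate|]. rewrite eval_comp in Hn.
  destruct (evl n gs l) eqn:E; [|discriminate]. exists l0. split.
  - eapply evl_sound; eauto.
  - exists n; exact Hn.
Qed.

Lemma h_comp1 f g l a v : halts g l a -> halts f [a] v -> halts (CComp f [g]) l v.
Proof. intros; eapply h_comp; eauto. Qed.
Lemma h_comp2 f g1 g2 l a b v : halts g1 l a -> halts g2 l b -> halts f [a;b] v ->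
  halts (CComp f [g1;g2]) l v.
Proof. intros; eapply h_comp; eauto. Qed.
Lemma h_comp3 f g1 g2 g3 l a b c v : halts g1 l a -> halts g2 l b -> halts g3 l c ->
  halts f [a;b;c] v -> halts (CComp f [g1;g2;g3]) l v.
Proof. intros; eapply h_comp; eauto. Qed.

Lemma h_prim0 f g r v : halts f r v -> halts (CPrim f g) (0 :: r) v.
Proof. intros [n Hn]. exists (S n). rewrite eval_prim. exact Hn. Qed.

Lemma h_primS f g x r w v : halts (CPrim f g) (x :: r) w -> halts g (x :: w :: r) v ->
  halts (CPrim f g) (S x :: r) v.
Proof.
  intros H1 H2. destruct (halts_ev _ _ _ H1) as [N HN]. destruct (halts_ev _ _ _ H2) as [M HM].
  exists (S (max N M)). rewrite eval_prim. cbn [hd tl]. rewrite HN by lia. apply HM; lia.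
Qed.

Lemma search_ok n f l y : forall k i, i <= y -> y - i < k ->
  eval n f (y :: l) = Some 0 ->
  (forall j, i <= j < y -> exists w, w <> 0 /\ eval n f (j :: l) = Some w) ->
  search n f l k i = Some y.
Proof.
  induction k as [|k IH]; intros i Hi Hk Hy Hj; [lia|]. cbn.
  destruct (Nat.eq_dec i y) as [->|Hne]; [rewrite Hy; reflexivity|].
  destruct (Hj i) as [w [Hw Ew]]; [lia|]. rewrite Ew. destruct w; [lia|].
  apply IH; auto; try lia. intros; apply Hj; lia.
Qed.

Lemma h_mu f l y : halts f (y :: l) 0 -> (forall j, j < y -> exists w, w <> 0 /\ halts f (j :: l) w) ->
  halts (CMu f) l y.
Proof.
  intros H1 H2.
  assert (HJ: forall y', y' <= y -> exists N, forall m, N <= m ->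
     forall j, j < y' -> exists w, w <> 0 /\ eval m f (j :: l) = Some w).
  { induction y' as [|y' IHy]; intros Hy'.
    - exists 0. intros; lia.
    - destruct (H2 y') as [w [Hw Ew]]; [lia|]. destruct (halts_ev _ _ _ Ew) as [N1 HN1].
      destruct IHy as [N2 HN2]; [lia|].
      exists (max N1 N2). intros m Hm j Hj. destruct (Nat.eq_dec j y') as [->|].
      + exists w. split; auto. apply HN1; lia.
      + apply (HN2 m); lia. }
  destruct (HJ y (le_n _)) as [N3 HN3]. destruct (halts_ev _ _ _ H1) as [N0 HN0].
  assert (HN: exists N, forall m, N <= m -> eval m f (y::l) = Some 0 /\
     forall j, j < y -> exists w, w <> 0 /\ eval m f (j :: l) = Some w).
  { exists (max N0 N3). intros m Hm. split; [apply HN0; lia|]. apply HN3; lia. }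
  destruct HN as [N HN]. exists (S (max N (S y))). rewrite eval_mu.
  destruct (HN (max N (S y))) as [A B]; [lia|].
  apply search_ok; auto; try lia. intros; apply B; lia.
Qed.

Lemma search_sound n f l k i y : search n f l k i = Some y -> eval n f (y :: l) = Some 0.
Proof.
  revert i; induction k; intros i H; cbn in H; [discriminate|].
  destruct (eval n f (i :: l)) as [[|w]|] eqn:E; [injection H as <-; exact E|eauto|discriminate].
Qed.

Lemma h_mu_inv f l y : halts (CMu f) l y -> halts f (y :: l) 0.
Proof.
  intros [[|n] Hn]; [discriminate|]. rewrite eval_mu in Hn. exists n. eapply search_sound; eauto.
Qed.

Fixpoint constc k := match k with 0 => CZero | S k => CComp CSucc [constc k] end.
Lemma h_const k l : halts (constc k) l k.
Proof. induction k; cbn. apply h_zero. eapply h_comp1; [exact IHk|apply h_succ]. Qed.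

Definition addc := CPrim (CProj 0) (CComp CSucc [CProj 1]).
Lemma h_add x y r : halts addc (x :: y :: r) (x + y).
Proof.
  induction x. apply h_prim0, h_proj.
  eapply h_primS; [exact IHx|]. eapply h_comp1; [apply h_proj|apply h_succ].
Qed.

Definition mulc := CPrim CZero (CComp addc [CProj 1; CProj 2]).
Lemma h_mul x y r : halts mulc (x :: y :: r) (x * y).
Proof.
  induction x. apply h_prim0, h_zero.
  eapply h_primS; [exact IHx|]. eapply h_comp2; [apply h_proj|apply h_proj|].
  cbn. replace (y + x * y) with (x * y + y) by lia. apply h_add.
Qed.

Definition predc := CPrim CZero (CProj 0).
Lemma h_pred x r : halts predc (x :: r) (pred x).
Proof. induction x. apply h_prim0, h_zero. eapply h_primS; [exact IHx|apply h_proj]. Qed.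

Definition subrc := CPrim (CProj 0) (CComp predc [CProj 1]).
Lemma h_subr y x r : halts subrc (y :: x :: r) (x - y).
Proof.
  induction y. replace (x - 0) with x by lia. apply h_prim0, h_proj.
  eapply h_primS; [exact IHy|]. eapply h_comp1; [apply h_proj|]. cbn.
  replace (x - S y) with (pred (x - y)) by lia. apply h_pred.
Qed.

Definition subc := CComp subrc [CProj 1; CProj 0].
Lemma h_sub x y r : halts subc (x :: y :: r) (x - y).
Proof. eapply h_comp2; [apply h_proj|apply h_proj|apply h_subr]. Qed.

Definition pow2c := CPrim (constc 1) (CComp mulc [CProj 1; constc 2]).
Lemma h_pow2 k r : halts pow2c (k :: r) (2 ^ k).
Proof.
  induction k. apply h_prim0, h_const.
  eapply h_primS; [exact IHk|]. eapply h_comp2; [apply h_proj|apply h_const|]. cbn.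
  replace (2 ^ k + (2 ^ k + 0)) with (2 ^ k * 2) by lia. apply h_mul.
Qed.

Fixpoint tri k := match k with 0 => 0 | S k => S k + tri k end.
Definition tric := CPrim CZero (CComp addc [CComp CSucc [CProj 0]; CProj 1]).
Lemma h_tri k r : halts tric (k :: r) (tri k).
Proof.
  induction k. apply h_prim0, h_zero.
  eapply h_primS; [exact IHk|]. eapply h_comp2.
  eapply h_comp1; [apply h_proj|apply h_succ]. apply h_proj. apply h_add.
Qed.

Definition eqc := CComp addc [subc; CComp subc [CProj 1; CProj 0]].
Lemma h_eq x y r : halts eqc (x :: y :: r) ((x - y) + (y - x)).
Proof. eapply h_comp2; [apply h_sub| |apply h_add]. eapply h_comp2; [apply h_proj|apply h_proj|apply h_sub]. Qed.

Lemma tri_mono a b : a <= b -> tri a <= tri b.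
Proof. induction 1; cbn; lia. Qed.

Lemma tri_ex n : exists k, tri k <= n < tri (S k).
Proof.
  induction n. exists 0; cbn; lia.
  destruct IHn as [k Hk]. destruct (Nat.eq_dec (S n) (tri (S k))).
  - exists (S k). cbn in *. lia.
  - exists k. cbn in *. lia.
Qed.

Definition dtest := CComp subc [CComp CSucc [CProj 1]; CComp tric [CComp CSucc [CProj 0]]].
Lemma h_dtest k n r : halts dtest (k :: n :: r) (S n - tri (S k)).
Proof.
  eapply h_comp2; [| |apply h_sub].
  eapply h_comp1; [apply h_proj|apply h_succ].
  eapply h_comp1; [eapply h_comp1; [apply h_proj|apply h_succ]|apply h_tri].
Qed.

Definition dcode := CMu dtest.
Lemma h_dcode n r k : tri k <= n < tri (S k) -> halts dcode (n :: r) k.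
Proof.
  intros Hk. apply h_mu.
  - replace 0 with (S n - tri (S k)) by lia. apply h_dtest.
  - intros j Hj. exists (S n - tri (S j)). split; [|apply h_dtest].
    pose proof (tri_mono (S j) k ltac:(lia)). lia.
Qed.

Definition sndc := CComp subc [CProj 0; CComp tric [dcode]].
Definition fstc := CComp subc [dcode; sndc].

Lemma tri_nat_rec k : tri k = nat_rec _ 0 (fun i m => S i + m) k.
Proof. induction k; cbn; auto. Qed.

Lemma of_nat_tri n k : tri k <= n < tri (S k) -> Cantor.of_nat n = (k - (n - tri k), n - tri k).
Proof.
  intros Hk. assert (E: to_nat (k - (n - tri k), n - tri k) = n).
  { cbn [to_nat].
    assert (E2: n - tri k + (k - (n - tri k)) = k) by (cbn in Hk; lia). rewrite E2.
    rewrite <- (tri_nat_rec k). lia. }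
  rewrite <- E at 1. apply cancel_of_to.
Qed.

Lemma h_snd n r : halts sndc (n :: r) (snd (Cantor.of_nat n)).
Proof.
  destruct (tri_ex n) as [k Hk]. rewrite (of_nat_tri _ _ Hk). cbn [snd].
  eapply h_comp2; [apply h_proj| |apply h_sub].
  eapply h_comp1; [apply h_dcode; exact Hk|apply h_tri].
Qed.

Lemma h_fst n r : halts fstc (n :: r) (fst (Cantor.of_nat n)).
Proof.
  destruct (tri_ex n) as [k Hk]. rewrite (of_nat_tri _ _ Hk). cbn [fst].
  eapply h_comp2; [apply h_dcode; exact Hk| |apply h_sub].
  pose proof (h_snd n r) as H. rewrite (of_nat_tri _ _ Hk) in H. exact H.
Qed.

Lemma enc_inj x y : enc x = enc y -> x = y.
Proof.
  revert y; induction x as [|a x IH]; intros [|b y] H; cbn in H; try lia; auto.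
  destruct a, b; try lia; f_equal; apply IH; lia.
Qed.

Lemma enc_surj a : exists x, enc x = a.
Proof.
  induction a as [a IH] using lt_wf_ind. destruct a as [|m]. exists nil; reflexivity.
  destruct (IH (Nat.div2 m) ltac:(pose proof (Nat.div2_odd m); destruct (Nat.odd m); cbn in *; lia)) as [x Hx].
  exists (Nat.odd m :: x). cbn. rewrite Hx.
  pose proof (Nat.div2_odd m). destruct (Nat.odd m); cbn in *; lia.
Qed.

Lemma enc_len p : enc p + 2 <= 2 ^ (length p + 1).
Proof.
  induction p as [|b p IH]; cbn; [lia|]. rewrite Nat.add_0_r. destruct b; lia.
Qed.

Definition ones n := repeat true n ++ [false].

Lemma enc_ones n : enc (ones n) + 2 = 3 * 2 ^ n.
Proof. unfold ones; induction n; cbn in *; lia. Qed.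

Lemma ones_len n : length (ones n) = S n.
Proof. unfold ones. rewrite length_app, repeat_length. cbn. lia. Qed.

Lemma ones_inv p : forall k, enc p + 2 = 3 * 2 ^ k -> p = ones k.
Proof.
  induction p as [|b p IH]; intros k H; cbn in H.
  - destruct k; cbn in H; [lia|]. pose proof (Nat.pow_nonzero 2 k). lia.
  - destruct b.
    + destruct k; cbn in H; [lia|]. unfold ones in *. cbn. f_equal. apply IH. lia.
    + destruct k; cbn in H.
      * destruct p; cbn in H; [reflexivity|lia].
      * exfalso. assert (Nat.even (1 + 2 * (enc p + 1)) = Nat.even (2 * (3 * 2 ^ k))) by (f_equal; lia).
        rewrite Nat.even_add_mul_2 in H0. rewrite Nat.even_mul in H0. cbn in H0. discriminate.
Qed.

Lemma ones_pf a b q : ones a ++ q = ones b -> q = nil.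
Proof.
  unfold ones. revert b; induction a; intros [|b] H; cbn in H.
  - injection H as H. exact H.
  - discriminate.
  - discriminate.
  - injection H as H. eapply IHa. rewrite <- app_assoc in H |- *. exact H.
Qed.

Definition guardk k := CMu (CComp eqc [CProj 1; constc k]).

Lemma h_guard_inner k j v r : halts (CComp eqc [CProj 1; constc k]) (j :: v :: r) ((v - k) + (k - v)).
Proof. eapply h_comp2; [apply h_proj|apply h_const|apply h_eq]. Qed.

Lemma guard_inv k v r z : halts (guardk k) (v :: r) z -> v = k.
Proof.
  intros H. apply h_mu_inv in H. pose proof (halts_det _ _ _ _ H (h_guard_inner k z v r)). lia.
Qed.

Lemma guard_intro k r : halts (guardk k) (k :: r) 0.
Proof.
  apply h_mu; [|intros; lia]. pose proof (h_guard_inner k 0 k r) as H. rewrite Nat.sub_diag in H. exact H.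
Qed.

Definition machK k body := CComp (CProj 1) [guardk k; body].

Lemma comp2_inv f g1 g2 l x : halts (CComp f [g1; g2]) l x ->
  exists a b, halts g1 l a /\ halts g2 l b /\ halts f [a; b] x.
Proof.
  intros H. apply h_comp_inv in H. destruct H as [vs [H1 H2]].
  inversion H1; subst. inversion H5; subst. inversion H7; subst. eauto.
Qed.

Lemma comp1_inv f g1 l x : halts (CComp f [g1]) l x ->
  exists a, halts g1 l a /\ halts f [a] x.
Proof.
  intros H. apply h_comp_inv in H. destruct H as [vs [H1 H2]].
  inversion H1; subst. inversion H5; subst. eauto.
Qed.

Lemma machK_inv k body v r x : halts (machK k body) (v :: r) x -> v = k /\ halts body (v :: r) x.
Proof.
  intros H. apply comp2_inv in H. destruct H as [a [b [H1 [H2 H3]]]].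
  apply guard_inv in H1. pose proof (halts_det _ _ _ _ H3 (h_proj 1 [a; b])). cbn in H. subst. auto.
Qed.

Lemma machK_intro k body r x : halts body (k :: r) x -> halts (machK k body) (k :: r) x.
Proof. intros H. eapply h_comp2; [apply guard_intro|exact H|apply h_proj]. Qed.

Definition gtest := CComp eqc [CComp mulc [constc 3; CComp pow2c [CProj 0]]; CComp addc [CProj 1; constc 2]].
Definition gshape := CMu gtest.

Lemma h_gtest j v r : halts gtest (j :: v :: r) ((3 * 2 ^ j - (v + 2)) + ((v + 2) - 3 * 2 ^ j)).
Proof.
  eapply h_comp2; [| |apply h_eq].
  - eapply h_comp2; [apply h_const| |apply h_mul]. eapply h_comp1; [apply h_proj|apply h_pow2].
  - eapply h_comp2; [apply h_proj|apply h_const|apply h_add].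
Qed.

Lemma gshape_inv v r z : halts gshape (v :: r) z -> v + 2 = 3 * 2 ^ z.
Proof.
  intros H. apply h_mu_inv in H. pose proof (halts_det _ _ _ _ H (h_gtest z v r)). lia.
Qed.

Lemma gshape_intro v r n : v + 2 = 3 * 2 ^ n -> halts gshape (v :: r) n.
Proof.
  intros Hn. apply h_mu.
  - pose proof (h_gtest n v r) as H. replace ((3 * 2 ^ n - (v + 2)) + ((v + 2) - 3 * 2 ^ n)) with 0 in H by lia. exact H.
  - intros j Hj. eexists; split; [|apply h_gtest].
    pose proof (Nat.pow_lt_mono_r 2 j n ltac:(lia) Hj). lia.
Qed.

Open Scope Q_scope.

Definition qn (n : nat) : Q := inject_Z (Z.of_nat n).

Lemma q_frac_lt (a b v : nat) : (0 < b)%nat -> (0 < v)%nat ->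
  (qn a / qn b < 1 / qn v <-> (a * v < b)%nat).
Proof.
  intros Hb Hv. destruct b as [|b]; [lia|]. destruct v as [|v]; [lia|].
  unfold qn, Qlt, Qdiv, Qmult, Qinv, inject_Z. cbn.
  rewrite !Zpos_P_of_succ_nat. nia.
Qed.

Lemma q_dec_lt (A B C v : nat) : (0 < v)%nat ->
  ((qn A - qn B) / qn (S C) < 1 / qn v <-> (v * A <= v * B + C)%nat).
Proof.
  intros Hv. destruct v as [|v]; [lia|].
  unfold qn, Qlt, Qdiv, Qmult, Qinv, Qminus, Qplus, Qopp, inject_Z. cbn.
  rewrite !Zpos_P_of_succ_nat. nia.
Qed.

Lemma decodeQ_eq n : decodeQ n = let (A, r) := Cantor.of_nat n in let (B, C) := Cantor.of_nat r in
   (qn A - qn B) / qn (S C).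
Proof. reflexivity. Qed.

Lemma lim_le (g : nat -> Q) q : Q_limit g q -> (forall s, g (S s) <= g s) -> forall s, q <= g s.
Proof.
  intros Hl Hm s. destruct (Qlt_le_dec (g s) q) as [H|H]; [|exact H]. exfalso.
  assert (Hd : forall t, (s <= t)%nat -> g t <= g s).
  { induction 1; [apply Qle_refl|]. eapply Qle_trans; [apply Hm|exact IHle]. }
  destruct (Hl (q - g s)) as [s0 Hs0]. { unfold Qminus. rewrite <- Qlt_minus_iff. exact H. }
  specialize (Hs0 (max s0 s) ltac:(lia)). specialize (Hd (max s0 s) ltac:(lia)).
  apply Qabs_diff_Qlt_condition in Hs0. destruct Hs0 as [_ H1].
  assert (g s < g (max s0 s)).
  { apply (Qplus_lt_l _ _ (q - g s)). eapply Qlt_le_trans; [|apply Qle_refl].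
    eapply Qle_lt_trans; [|exact H1]. ring_simplify. apply Qle_refl. }
  apply Qlt_not_le in H0. contradiction.
Qed.

Lemma lim_lt (g : nat -> Q) q B : Q_limit g q -> q < B -> exists s, g s < B.
Proof.
  intros Hl HB. destruct (Hl (B - q)) as [s0 Hs0]. { unfold Qminus. rewrite <- Qlt_minus_iff. exact HB. }
  exists s0. specialize (Hs0 s0 (le_n _)).
  apply Qabs_diff_Qlt_condition in Hs0. destruct Hs0 as [H2 _].
  apply (Qplus_lt_l _ _ (- (B - q))). eapply Qlt_le_trans; [exact H2|]. ring_simplify. apply Qle_refl.
Qed.

Open Scope nat_scope.

Definition Rc e := CComp e [CComp fstc [CProj 0]; CComp fstc [CProj 0]; CComp sndc [CProj 0]].
Definition Ac e := CComp fstc [Rc e].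
Definition Bc e := CComp fstc [CComp sndc [Rc e]].
Definition Cc e := CComp sndc [CComp sndc [Rc e]].
Definition Hc e := CComp subc [CComp mulc [CProj 1; Ac e]; CComp addc [CComp mulc [CProj 1; Bc e]; Cc e]].
Definition bodyM e := CComp fstc [CMu (Hc e)].
Definition mainM e := CComp (CProj 1) [gshape; bodyM e].

Lemma h_R e w r rv : halts e [fst (of_nat w); fst (of_nat w); snd (of_nat w)] rv -> halts (Rc e) (w :: r) rv.
Proof.
  intros H. eapply h_comp3; [| | |exact H];
  (eapply h_comp1; [apply h_proj|]); cbn [nth]; [apply h_fst|apply h_fst|apply h_snd].
Qed.

Lemma h_Hc e w v r rv : halts e [fst (of_nat w); fst (of_nat w); snd (of_nat w)] rv ->
  halts (Hc e) (w :: v :: r) (v * fst (of_nat rv) - (v * fst (of_nat (snd (of_nat rv))) + snd (of_nat (snd (of_nat rv))))).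
Proof.
  intros H. pose proof (h_R e w (v :: r) rv H) as HR.
  eapply h_comp2; [| |apply h_sub].
  - eapply h_comp2; [apply h_proj| |apply h_mul]. eapply h_comp1; [exact HR|apply h_fst].
  - eapply h_comp2; [| |apply h_add].
    + eapply h_comp2; [apply h_proj| |apply h_mul].
      eapply h_comp1; [eapply h_comp1; [exact HR|apply h_snd]|apply h_fst].
    + eapply h_comp1; [eapply h_comp1; [exact HR|apply h_snd]|apply h_snd].
Qed.

Lemma mu_total f l y : (forall j, exists z, halts f (j :: l) z) -> halts f (y :: l) 0 ->
  exists y', halts (CMu f) l y'.
Proof.
  intros Ht. induction y as [y IH] using lt_wf_ind. intros Hy.
  destruct (classic (exists j, j < y /\ halts f (j :: l) 0)) as [[j [Hj1 Hj2]]|Hn].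
  - exact (IH j Hj1 Hj2).
  - exists y. apply h_mu; auto. intros j Hj. destruct (Ht j) as [z Hz]. exists z. split; auto.
    intros ->. apply Hn. eauto.
Qed.

Lemma machK_pf k body : prefix_free_machine (machK k body).
Proof.
  intros y p q [x1 H1] [x2 H2]. unfold runs in *.
  apply machK_inv in H1. apply machK_inv in H2. destruct H1 as [E1 _]. destruct H2 as [E2 _].
  rewrite <- E2 in E1. apply enc_inj in E1.
  destruct q; auto. apply (f_equal (@length bool)) in E1. rewrite length_app in E1. cbn in E1. lia.
Qed.

Lemma mainM_inv e v r x : halts (mainM e) (v :: r) x -> (exists z, v + 2 = 3 * 2 ^ z) /\ halts (bodyM e) (v :: r) x.
Proof.
  intros H. apply comp2_inv in H. destruct H as [a [b [H1 [H2 H3]]]].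
  apply gshape_inv in H1. pose proof (halts_det _ _ _ _ H3 (h_proj 1 [a; b])). cbn in H. subst. eauto.
Qed.

Lemma mainM_pf e : prefix_free_machine (mainM e).
Proof.
  intros y p q [x1 H1] [x2 H2]. unfold runs in *.
  apply mainM_inv in H1. apply mainM_inv in H2. destruct H1 as [[z1 E1] _]. destruct H2 as [[z2 E2] _].
  apply ones_inv in E1. apply ones_inv in E2. subst p. eapply ones_pf; eauto.
Qed.


Lemma no_empty (u : code) (hU : universal_pf u) y x : runs u nil y x -> False.
Proof.
  intros H. destruct hU as [Hpf Hun]. destruct (Hun _ (machK_pf 2 (CProj 1))) as [sg Hsg].
  assert (runs u (sg ++ [true]) y y).
  { apply Hsg. unfold runs. cbn [enc]. apply machK_intro. apply (h_proj 1 [2; enc y]). }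
  assert (sg ++ [true] = nil). { eapply (Hpf y nil); [exists x; exact H|exists y; exact H0]. }
  destruct sg; discriminate.
Qed.

Lemma Kc_exists (u : code) x y : (exists p, runs u p y x) -> exists k, Kc u x y k.
Proof.
  intros [p Hp]. remember (length p) as m. revert p Hp Heqm.
  induction m as [m IH] using lt_wf_ind. intros p Hp Hm.
  destruct (classic (exists p', runs u p' y x /\ length p' < m)) as [[p' [H1 H2]]|Hn].
  - exact (IH _ H2 p' H1 eq_refl).
  - exists m. split; [eauto|]. intros p' H'. destruct (le_lt_dec m (length p')); auto.
    exfalso; eauto.
Qed.

Lemma Kc_ge1 (u : code) (hU : universal_pf u) x y k : Kc u x y k -> 1 <= k.
Proof.
  intros [[p [Hp Hl]] _]. destruct p; [exfalso; eapply no_empty; eauto|]. cbn in Hl. lia.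
Qed.

Lemma counting (u : code) N : exists x, forall p, runs u p nil x -> N < length p.
Proof.
  apply NNPP. intros Hn.
  assert (H : forall x, exists p, runs u p nil x /\ length p <= N).
  { intros x. apply NNPP. intros Hx. apply Hn. exists x. intros p Hp.
    destruct (le_lt_dec (length p) N); auto. exfalso. eauto. }
  assert (Hi : forall i, exists j, exists x p, enc x = i /\ enc p = j /\ runs u p nil x /\ length p <= N).
  { intros i. destruct (enc_surj i) as [x Hx]. destruct (H x) as [p [Hp Hl]]. eauto 10. }
  pose (g := fun i => proj1_sig (constructive_indefinite_description _ (Hi i))).
  assert (Hg : forall i, exists x p, enc x = i /\ enc p = g i /\ runs u p nil x /\ length p <= N).
  { intros i. exact (proj2_sig (constructive_indefinite_description _ (Hi i))). }
  assert (Ginj : Injective g).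
  { intros i i' E. destruct (Hg i) as [x [p [Hx [Hp [Hr _]]]]]. destruct (Hg i') as [x' [p' [Hx' [Hp' [Hr' _]]]]].
    rewrite <- Hp, <- Hp' in E. apply enc_inj in E. subst p'.
    pose proof (halts_det _ _ _ _ Hr Hr'). congruence. }
  pose (M := 2 ^ (N + 1)).
  assert (Hinc : incl (map g (seq 0 M)) (seq 0 (M - 1))).
  { intros j Hj. apply in_map_iff in Hj. destruct Hj as [i [<- _]].
    destruct (Hg i) as [x [p [_ [Hp [_ Hl]]]]]. rewrite <- Hp. apply in_seq.
    pose proof (enc_len p). pose proof (Nat.pow_le_mono_r 2 (length p + 1) (N + 1) ltac:(lia) ltac:(lia)).
    unfold M. lia. }
  pose proof (NoDup_incl_length (Injective_map_NoDup Ginj (seq_NoDup M 0)) Hinc) as HL.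
  rewrite length_map, !length_seq in HL. unfold M in HL. pose proof (Nat.pow_nonzero 2 (N + 1)). lia.
Qed.



Open Scope Q_scope.

Theorem mainTheorem4 (u : code) (hU : universal_pf u) :
  ~ exists f : bstr -> bstr -> nat -> Q,
      computable3 f /\
      (forall x y s, f x y (S s) <= f x y s) /\
      (forall x y q, NID_is u x y q -> Q_limit (f x y) q).
Proof.
  intros [f [[e He] [Hmono Hlim]]].
  pose proof hU as [Hpf Huniv].
  destruct (Huniv _ (machK_pf 0 (CProj 1))) as [sc Hsc].
  assert (Hcopy : forall x, runs u sc x x).
  { intros x. rewrite <- (app_nil_r sc). apply Hsc. unfold runs. cbn [enc].
    apply machK_intro. apply (h_proj 1 [0%nat; enc x]). }
  assert (Hconst : forall x, exists p, runs u p nil x).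
  { intros x. destruct (Huniv _ (machK_pf 0 (constc (enc x)))) as [sx Hsx].
    exists sx. rewrite <- (app_nil_r sx). apply Hsx. unfold runs. cbn [enc].
    apply machK_intro. apply h_const. }
  destruct (Huniv _ (mainM_pf e)) as [sg Hsg].
  set (n := (length sg + 2)%nat). set (p := ones n). set (v := enc p).
  assert (Hv : (v + 2 = 3 * 2 ^ n)%nat) by apply enc_ones.
  assert (Hvb : (length sg + n + 1 <= v /\ 0 < v)%nat).
  { pose proof (Nat.pow_gt_lin_r 2 n ltac:(lia)). unfold n in *. lia. }
  assert (Hex : exists x s, f x x s < 1 / qn v).
  { destruct (counting u (length sc * v)) as [x Hx].
    destruct (Kc_exists u x x (ex_intro _ sc (Hcopy x))) as [kxx Hkxx].
    destruct (Kc_exists u x nil (Hconst x)) as [kx Hkx].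
    assert (Hq : NID_is u x x (qn (Nat.max kxx kxx) / qn (Nat.max kx kx))).
    { exists kxx, kxx, kx, kx. split; [exact Hkxx|split; [exact Hkxx|split; [exact Hkx|split; [exact Hkx|apply Qeq_refl]]]]. }
    assert (kxx <= length sc)%nat by (apply (proj2 Hkxx); apply Hcopy).
    assert (length sc * v < kx)%nat.
    { destruct Hkx as [[p0 [Hp0 Hl]] _]. rewrite <- Hl. auto. }
    pose proof (Kc_ge1 u hU _ _ _ Hkx).
    assert (Hm : (Nat.max kxx kxx * v < Nat.max kx kx)%nat) by (rewrite (Nat.max_id kxx), (Nat.max_id kx); nia).
    assert (Hmk : (0 < Nat.max kx kx)%nat) by lia.
    destruct (lim_lt _ _ _ (Hlim _ _ _ Hq) (proj2 (q_frac_lt _ _ v Hmk (proj2 Hvb)) Hm)) as [s Hs].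
    eauto. }
  destruct Hex as [x0 [s0 Hs0]].
  assert (Htot : forall j, exists z, halts (Hc e) (j :: v :: [0%nat]) z).
  { intros j. destruct (enc_surj (fst (of_nat j))) as [xa Hxa].
    destruct (He xa xa (snd (of_nat j))) as [rv [Hrv _]]. rewrite Hxa in Hrv.
    eexists. apply h_Hc. exact Hrv. }
  destruct (He x0 x0 s0) as [rv0 [Hrv0 Hd0]].
  set (w0 := to_nat (enc x0, s0)).
  assert (Hw0 : of_nat w0 = (enc x0, s0)) by apply cancel_of_to.
  assert (Hz : halts (Hc e) (w0 :: v :: [0%nat]) 0).
  { pose proof (h_Hc e w0 v [0%nat] rv0) as H. rewrite Hw0 in H. specialize (H Hrv0).
    assert (decodeQ rv0 < 1 / qn v) as Hlt by (rewrite Hd0; exact Hs0).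
    rewrite decodeQ_eq in Hlt. destruct (of_nat rv0) as [A r1] eqn:E1. destruct (of_nat r1) as [B Cc0] eqn:E2.
    try rewrite E1 in H; cbn [fst snd] in H; try rewrite E2 in H; cbn [fst snd] in H. apply q_dec_lt in Hlt; [|lia].
    replace (v * A - (v * B + Cc0))%nat with 0%nat in H by lia. exact H. }
  destruct (mu_total _ _ _ Htot Hz) as [w Hw].
  destruct (enc_surj (fst (of_nat w))) as [x Hx].
  assert (HM : runs (mainM e) p nil x).
  { unfold runs. cbn [enc]. eapply h_comp2 with (b := enc x); [apply gshape_intro; exact Hv| |apply (h_proj 1 [n; enc x])].
    eapply h_comp1; [exact Hw|]. rewrite Hx. apply h_fst. }
  assert (HU : runs u (sg ++ p) nil x) by (apply Hsg; exact HM).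
  assert (Hf : exists s, f x x s < 1 / qn v).
  { unfold runs in HM. cbn [enc] in HM. apply mainM_inv in HM. destruct HM as [_ HB].
    apply comp1_inv in HB. destruct HB as [w' [Hw' Hf']].
    pose proof (halts_det _ _ _ _ Hf' (h_fst w' [])) as Ex.
    apply h_mu_inv in Hw'.
    destruct (He x x (snd (of_nat w'))) as [rv [Hrv Hd]].
    rewrite Ex in Hrv. pose proof (h_Hc e w' v [0%nat] rv Hrv) as H.
    pose proof (halts_det _ _ _ _ Hw' H) as E0.
    exists (snd (of_nat w')). rewrite <- Hd. rewrite decodeQ_eq.
    destruct (of_nat rv) as [A r1] eqn:E1. destruct (of_nat r1) as [B Cc0] eqn:E2.
    try rewrite E1 in E0; cbn [fst snd] in E0; try rewrite E2 in E0; cbn [fst snd] in E0.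
    apply q_dec_lt; lia. }
  destruct Hf as [s Hs].
  destruct (Kc_exists u x x (ex_intro _ sc (Hcopy x))) as [kxx Hkxx].
  destruct (Kc_exists u x nil (ex_intro (fun q => runs u q nil x) _ HU)) as [kx Hkx].
  assert (Hq : NID_is u x x (qn (Nat.max kxx kxx) / qn (Nat.max kx kx))).
  { exists kxx, kxx, kx, kx. split; [exact Hkxx|split; [exact Hkxx|split; [exact Hkx|split; [exact Hkx|apply Qeq_refl]]]]. }
  pose proof (lim_le _ _ (Hlim _ _ _ Hq) (Hmono x x) s) as Hle.
  pose proof (Qle_lt_trans _ _ _ Hle Hs) as Hlt.
  pose proof (Kc_ge1 u hU _ _ _ Hkxx). pose proof (Kc_ge1 u hU _ _ _ Hkx).
  apply q_frac_lt in Hlt; [|lia|lia]. rewrite !Nat.max_id in Hlt.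
  assert (kx <= length (sg ++ p))%nat by (apply (proj2 Hkx); exact HU).
  rewrite length_app in H1. unfold p in H1. rewrite ones_len in H1.
  nia.
Qed.
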